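(* Let $N\ge 2$ and $1\le\tilde N\le N-1$ be integers. Let $\beta>0$ satisfy $(\beta+1)^{N-\tilde N-1}>\beta^{N-\tilde N+1}$, and suppose that, for all $x\in\mathcal{X}$, $$V_{\tilde N+1}^{\tilde N}(x)\le (\beta+1)\,V_{\tilde N}^{\tilde N}(x)\qquad\text{and}\qquad V_n^{\tilde N}(x)\le (\beta+1)\,l(x,\mu_n(x))\ \text{ for all } n\in\{\tilde N+1,\dots,N\}.$$ Set $\alpha=1-\frac{\beta^{N-\tilde N+1}}{(\beta+1)^{N-\tilde N-1}}$. Then for every $x\in\mathcal{X}$, $$V_N^{\tilde N}\big(f(x,\mu_N(x))\big)-V_N^{\tilde N}(x)\le -\alpha\, l\big(x,\mu_N(x)\big).$$ Hence $V_N^{\tilde N}$, which is positive definite, is a Lyapunov function for the closed-loop system $x(k+1)=f(x(k),\mu_N(x(k)))$ on $\mathcal{X}$.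
   Context: Let $\mathcal{D}\subset\mathbb{R}^n$ and $\mathcal{U}\subset\mathbb{R}^m$ be compact, and let $f:\mathcal{D}\times\mathcal{U}\to\mathcal{D}$ define the discrete-time system $x(k+1)=f(x(k),u(k))$, with $f(0,0)=0$. The stage cost $l:\mathcal{D}\times\mathcal{U}\to[0,\infty)$ is positive definite with $l(0,0)=0$. The set $\mathcal{X}\subseteq\mathcal{D}$ is control invariant: for every $x\in\mathcal{X}$ there is $u\in\mathcal{U}$ with $f(x,u)\in\mathcal{X}$. For $x\in\mathcal{X}$ write $\mathcal{U}(x)=\{u\in\mathcal{U}: f(x,u)\in\mathcal{X}\}$. Fix integers $N$ and $\tilde N$ with $0\le\tilde N\le N-1$. Define value functions on $\mathcal{X}$ recursively (dynamic programming form of the MPC problem with prediction horizon $N$ in which the state constraint $x\in\mathcal{X}$ is imposed only during the first $N-\tilde N$ steps, the last $\tilde N$ steps being unconstrained): - $V_0^{\tilde N}\equiv 0$. - For $n\in\{1,\dots,\tilde N\}$: $V_n^{\tilde N}(x)=\min_{u\in\mathcal{U}}\big[V_{n-1}^{\tilde N}(f(x,u))+l(x,u)\big]$, with $\mu_n(x)$ a minimizer. - For $n\in\{\tilde N+1,\dots,N\}$: $V_n^{\tilde N}(x)=\min_{u\in\mathcal{U}(x)}\big[V_{n-1}^{\tilde N}(f(x,u))+l(x,u)\big]$, with $\mu_n(x)$ a minimizer; in particular $f(x,\mu_n(x))\in\mathcal{X}$. All minima are assumed to be attained. The closed-loop MPC feedback is $\mu_N$. *)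

(* Defs.v *)
From HB Require Import structures.
From mathcomp Require Import all_boot all_order all_algebra.
From mathcomp Require Import all_classical all_reals all_analysis.
Set Implicit Arguments. Unset Strict Implicit. Unset Printing Implicit Defensive.
Import Order.TTheory GRing.Theory Num.Theory.
Import numFieldNormedType.Exports.
Local Open Scope classical_set_scope.
Local Open Scope ring_scope.

Definition adm_controls (R : realType) (nx nu : nat)
  (U : set 'rV[R]_nu) (X : set 'rV[R]_nx) (f : 'rV[R]_nx -> 'rV[R]_nu -> 'rV[R]_nx)
  (x : 'rV[R]_nx) : set 'rV[R]_nu :=
  [set u | U u /\ X (f x u)].

Definition min_attained_at (T : Type) (R : realType) (S : set T) (g : T -> R)
  (u0 : T) (v : R) : Prop :=
  S u0 /\ v = g u0 /\ (forall u, S u -> v <= g u).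

(* (V, mu) are the value functions and minimizers of the dynamic programming
   recursion of the MPC problem with horizon N whose last Nt steps are
   unconstrained.  V n for n <= Nt is needed on D (it is evaluated at f(x,u),
   which lies in D), V n for Nt < n <= N on X. *)
Definition mpc_dp (R : realType) (nx nu : nat)
  (D : set 'rV[R]_nx) (U : set 'rV[R]_nu) (X : set 'rV[R]_nx)
  (f : 'rV[R]_nx -> 'rV[R]_nu -> 'rV[R]_nx) (l : 'rV[R]_nx -> 'rV[R]_nu -> R)
  (N Nt : nat) (V : nat -> 'rV[R]_nx -> R) (mu : nat -> 'rV[R]_nx -> 'rV[R]_nu)
  : Prop :=
  (forall x, D x -> V 0%N x = 0) /\
  (forall n x, (1 <= n <= Nt)%N -> D x ->
     min_attained_at U (fun u => V n.-1 (f x u) + l x u) (mu n x) (V n x)) /\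
  (forall n x, (Nt < n <= N)%N -> X x ->
     min_attained_at (adm_controls U X f x)
       (fun u => V n.-1 (f x u) + l x u) (mu n x) (V n x)).

(* Main.v *)
Require Import Defs.
From HB Require Import structures.
From mathcomp Require Import all_boot all_order all_algebra.
From mathcomp Require Import all_classical all_reals all_analysis.
From mathcomp Require Import ring lra zify.
Import Order.TTheory GRing.Theory Num.Theory.
Import numFieldNormedType.Exports.
Local Open Scope classical_set_scope.
Local Open Scope ring_scope.

Lemma key_step (R : realType) (nx nu : nat)
  (U : set 'rV[R]_nu) (X : set 'rV[R]_nx)
  (f : 'rV[R]_nx -> 'rV[R]_nu -> 'rV[R]_nx) (l : 'rV[R]_nx -> 'rV[R]_nu -> R)
  (N Nt : nat) (V : nat -> 'rV[R]_nx -> R) (mu : nat -> 'rV[R]_nx -> 'rV[R]_nu)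
  (beta : R) :
  (forall n x, (Nt < n <= N)%N -> X x ->
     min_attained_at (adm_controls U X f x)
       (fun u => V n.-1 (f x u) + l x u) (mu n x) (V n x)) ->
  0 < beta ->
  (forall x, X x -> V Nt.+1 x <= (beta + 1) * V Nt x) ->
  (forall n x, (Nt < n <= N)%N -> X x -> V n x <= (beta + 1) * l x (mu n x)) ->
  forall k y, X y -> (Nt.+1 + k <= N)%N ->
    V (Nt.+1 + k)%N (f y (mu (Nt.+1 + k)%N y))
      - V (Nt.+1 + k)%N.-1 (f y (mu (Nt.+1 + k)%N y))
    <= beta * (beta / (beta + 1)) ^+ k
         * V (Nt.+1 + k)%N.-1 (f y (mu (Nt.+1 + k)%N y)).
Proof.
move=> H3 bpos Hb1 Hb2 k; elim: k => [|k IH] y Xy Hk.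
  have [[_ Xy1] _] := H3 (Nt.+1 + 0)%N y (ltac:(apply/andP; split; lia)) Xy.
  rewrite addn0 /= expr0 mulr1.
  rewrite addn0 in Xy1. have := Hb1 _ Xy1. move=> HH. lra.
set n := (Nt.+1 + k.+1)%N.
set n' := (Nt.+1 + k)%N.
have nn : n = n'.+1 by rewrite /n /n' addnS.
have [[_ Xy1] _] := H3 n y (ltac:(apply/andP; split; lia)) Xy.
set y1 := f y (mu n y).
have [[Uu Xy2] [Eq1 _]] := H3 n' y1 (ltac:(apply/andP; split; lia)) Xy1.
have [_ [_ Hmin]] := H3 n y1 (ltac:(apply/andP; split; lia)) Xy1.
have Hm := Hmin (mu n' y1) (conj Uu Xy2).
have IHy := IH y1 Xy1 (ltac:(lia)).
have Hb := Hb2 n' y1 (ltac:(apply/andP; split; lia)) Xy1.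
rewrite nn /= in Hm *.
rewrite -/n' in IHy.
set A := V n' y1 in Eq1 Hb Hm *.
set l1 := l y1 (mu n' y1) in Eq1 Hb Hm IHy.
set B := V n' (f y1 (mu n' y1)) in Hm IHy.
set C := V n'.-1 (f y1 (mu n' y1)) in Eq1 IHy.
set K := beta * (beta / (beta + 1)) ^+ k in IHy.
have K0 : 0 <= K.
  by rewrite /K mulr_ge0 ?exprn_ge0 ?divr_ge0 //; lra.
have HA : A - l1 <= beta / (beta + 1) * A.
  have -> : beta / (beta + 1) * A = A - A / (beta + 1) by field; lra.
  have : A / (beta + 1) <= l1 by rewrite ler_pdivrMr; [rewrite mulrC|lra].
  lra.
have HH : K * (A - l1) <= K * (beta / (beta + 1) * A) by apply: ler_wpM2l.
have EC : C = A - l1 by lra.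
rewrite EC in IHy.
have -> : beta * (beta / (beta + 1)) ^+ k.+1 * A = K * (beta / (beta + 1) * A).
  by rewrite exprSr /K; ring.
lra.
Qed.

Theorem mainTheorem3 (R : realType) (nx nu : nat)
  (D : set 'rV[R]_nx) (U : set 'rV[R]_nu) (X : set 'rV[R]_nx)
  (f : 'rV[R]_nx -> 'rV[R]_nu -> 'rV[R]_nx) (l : 'rV[R]_nx -> 'rV[R]_nu -> R)
  (N Nt : nat) (V : nat -> 'rV[R]_nx -> R) (mu : nat -> 'rV[R]_nx -> 'rV[R]_nu)
  (beta : R) :
  compact D -> compact U ->
  (forall x u, D x -> U u -> D (f x u)) ->
  f 0 0 = 0 ->
  (forall x u, D x -> U u -> 0 <= l x u) ->
  l 0 0 = 0 ->
  (forall x u, D x -> U u -> (x, u) <> (0, 0) -> 0 < l x u) ->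
  X `<=` D ->
  (forall x, X x -> exists u, U u /\ X (f x u)) ->
  mpc_dp D U X f l N Nt V mu ->
  (2 <= N)%N -> (1 <= Nt)%N -> (Nt <= N.-1)%N ->
  0 < beta ->
  beta ^+ (N - Nt + 1) < (beta + 1) ^+ (N - Nt - 1) ->
  (forall x, X x -> V Nt.+1 x <= (beta + 1) * V Nt x) ->
  (forall n x, (Nt < n <= N)%N -> X x -> V n x <= (beta + 1) * l x (mu n x)) ->
  let alpha := 1 - beta ^+ (N - Nt + 1) / (beta + 1) ^+ (N - Nt - 1) in
  forall x, X x ->
    V N (f x (mu N x)) - V N x <= - alpha * l x (mu N x).
Proof.
move=> _ _ _ _ _ _ _ _ _ [_ [_ H3]] HN HNt HNtN bpos _ Hb1 Hb2 alpha x Xx.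
set k := (N - Nt.+1)%N.
have Ek : (Nt.+1 + k)%N = N by rewrite /k; lia.
have Hk := @key_step R nx nu U X f l N Nt V mu beta H3 bpos Hb1 Hb2 k x Xx (ltac:(lia) : (Nt.+1 + k <= N)%N).
rewrite Ek in Hk.
have [_ [Eq _]] := H3 N x (ltac:(apply/andP; split; lia)) Xx.
have Hb := Hb2 N x (ltac:(apply/andP; split; lia)) Xx.
have E1 : (N - Nt + 1)%N = k.+2 by rewrite /k; lia.
have E2 : (N - Nt - 1)%N = k by rewrite /k; lia.
rewrite /alpha E1 E2.
set A := V N x in Eq Hb *.
set lam := l x (mu N x) in Eq Hb *.
set B := V N (f x (mu N x)) in Hk *.
set C := V N.-1 (f x (mu N x)) in Eq Hk *.
set K := beta * (beta / (beta + 1)) ^+ k in Hk.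
have K0 : 0 <= K.
  by rewrite /K mulr_ge0 ?exprn_ge0 ?divr_ge0 //; lra.
have HC : C <= beta * lam by lra.
have : K * C <= K * (beta * lam) by apply: ler_wpM2l.
have -> : beta ^+ k.+2 / (beta + 1) ^+ k = K * beta.
  rewrite /K expr_div_n !exprS; field.
  by apply/expf_neq0; lra.
move=> HH.
have -> : - (1 - K * beta) * lam = K * (beta * lam) - lam by ring.
move: Hk HH Eq; set P := K * C; set Q := K * (beta * lam).
clear; move=> Hk HH Eq; lra.
Qed.
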